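(* Let $\mathbf{k}$ be a commutative ring and $H$ a commutative connected graded $\mathbf{k}$-Hopf algebra. Let $\beta_H:H\to H\otimes\mathrm{QSym}_{\mathbf{k}}$ be defined by $\beta_H(h)=\sum_{\alpha\in\mathrm{Comp}}\xi_\alpha(h)\otimes M_\alpha$. (a) $\beta_H$ is a $\mathbf{k}$-algebra homomorphism and a graded $(\mathbf{k},H)$-coalgebra homomorphism. (b) $(\mathrm{id}_H\otimes\varepsilon_P)\circ\beta_H=\mathrm{id}_H$ (identifying $H\otimes\mathbf{k}$ with $H$). (c) $(\beta_H\otimes\mathrm{id}_{\mathrm{QSym}_{\mathbf{k}}})\circ\beta_H=(\mathrm{id}_H\otimes\Delta'_P)\circ\beta_H$ as maps $H\to H\otimes\mathrm{QSym}_{\mathbf{k}}\otimes\mathrm{QSym}_{\mathbf{k}}$. (d) If the $\mathbf{k}$-coalgebra $H$ is cocommutative, then $\beta_H(H)\subseteq H\otimes\Lambda_{\mathbf{k}}$, where $\Lambda_{\mathbf{k}}\subseteq\mathrm{QSym}_{\mathbf{k}}$ is the algebra of symmetric functions.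
   Context: Unadorned tensor products are over $\mathbf{k}$; graded means $\mathbb{N}$-graded, connected means $H_0\cong\mathbf{k}$ via the counit. A composition is a finite sequence of positive integers; $\mathrm{Comp}$ the set of compositions. $\mathrm{QSym}_{\mathbf{k}}\subseteq\mathbf{k}[[x_1,x_2,\ldots]]$ is the Hopf algebra of quasisymmetric functions with monomial basis $M_\alpha=\sum_{1\le i_1<\cdots<i_\ell}x_{i_1}^{\alpha_1}\cdots x_{i_\ell}^{\alpha_\ell}$ (for $\alpha=(\alpha_1,\ldots,\alpha_\ell)$, degree $\alpha_1+\cdots+\alpha_\ell$), with $\Delta(M_{(b_1,\ldots,b_\ell)})=\sum_{i=0}^\ell M_{(b_1,\ldots,b_i)}\otimes M_{(b_{i+1},\ldots,b_\ell)}$; $\varepsilon_P:\mathrm{QSym}_{\mathbf{k}}\to\mathbf{k}$, $f\mapsto f(1,0,0,\ldots)$. For $\alpha=(a_1,\ldots,a_k)$, $\xi_\alpha=m^{(k-1)}\circ\pi_\alpha\circ\Delta^{(k-1)}:H\to H$, where $\Delta^{(k-1)}:H\to H^{\otimes k}$ is the iterated comultiplication ($\Delta^{(-1)}=\varepsilon$, $\Delta^{(0)}=\mathrm{id}$, $\Delta^{(k)}=(\mathrm{id}\otimes\Delta^{(k-1)})\circ\Delta$), $m^{(k-1)}:H^{\otimes k}\to H$ is $h_1\otimes\cdots\otimes h_k\mapsto h_1\cdots h_k$ ($m^{(-1)}$ the unit), and $\pi_\alpha=\pi_{a_1}\otimes\cdots\otimes\pi_{a_k}$ with $\pi_n:H\to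 H$ the projection onto $H_n$. The sum defining $\beta_H(h)$ is finite. Second comultiplication: for $A=(a_{i,j})\in\mathbb{N}^{u\times v}$, $\mathrm{column}\,A$ is the $v$-tuple of column sums, $\mathrm{row}\,A$ the $u$-tuple of row sums, $\mathrm{read}\,A=(a_{1,1},\ldots,a_{1,v},\ldots,a_{u,1},\ldots,a_{u,v})$; $A$ is reduced if no row and no column is zero; $\mathbb{N}^{\bullet,\bullet}_{\mathrm{red}}$ is the set of all reduced matrices of all sizes; $w^{\mathrm{red}}$ is $w$ with zero entries removed. $\Delta_P$ is the $\mathbf{k}$-linear map $M_\gamma\mapsto\sum_{A\in\mathbb{N}^{\bullet,\bullet}_{\mathrm{red}},(\mathrm{read}\,A)^{\mathrm{red}}=\gamma}M_{\mathrm{row}\,A}\otimes M_{\mathrm{column}\,A}$, and $\Delta'_P=\tau\circ\Delta_P$ with $\tau$ the twist $x\otimes y\mapsto y\otimes x$. Extension of scalars: $H\otimes\mathrm{QSym}_{\mathbf{k}}$ is regarded as an $H$-module via $a(b\otimes q)=ab\otimes q$, an $H$-algebra, and an $H$-coalgebra with comultiplication $\mathrm{id}_H\otimes\Delta$ (identifying $H\otimes(Q\otimes Q)\cong(H\otimes Q)\otimes_H(H\otimes Q)$) and counit $\mathrm{id}_H\otimes\varepsilon$, graded by $(H\otimes\mathrm{QSym}_{\mathbf{k}})_n=H\otimes(\mathrm{QSym}_{\mathbf{k}})_n$ (the grading and coalgebra structure of the left factor $H$ are ignored). Also $H\otimes H$ (scalars extended to the left factor) is an $H$-coalgebra in the same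 way. A $\mathbf{k}$-linear $f:H\to G$ into an $H$-coalgebra $G$ is a $(\mathbf{k},H)$-coalgebra homomorphism if $f^\sharp:H\otimes H\to G$, $a\otimes h\mapsto af(h)$, is an $H$-coalgebra homomorphism; graded means $\beta_H(H_n)\subseteq H\otimes(\mathrm{QSym}_{\mathbf{k}})_n$. *)

(* Defs.v *)
From HB Require Import structures.
From mathcomp Require Import all_boot all_order all_algebra.

Set Implicit Arguments.
Unset Strict Implicit.
Unset Printing Implicit Defensive.

Import GRing.Theory.
Local Open Scope ring_scope.

(* An element of H (x) H is represented by a formal sum  sum_i a_i (x) b_i,  *)
(* i.e. a list of pairs; two formal sums are equal in H (x) H iff every      *)
(* k-bilinear map out of H x H (into any k-module) takes the same value on   *)
(* them (universal property of the tensor product).  Same for three factors.*)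
Section Tensors.
Variables (k : comPzRingType) (H : comAlgType k).

Definition bilinear2 (M : lmodType k) (f : H -> H -> M) : Prop :=
  forall (a : k) (x y z : H),
    f (a *: x + y) z = a *: f x z + f y z /\ f z (a *: x + y) = a *: f z x + f z y.

Definition trilinear3 (M : lmodType k) (f : H -> H -> H -> M) : Prop :=
  forall (a : k) (x y z w : H),
    [/\ f (a *: x + y) z w = a *: f x z w + f y z w,
        f z (a *: x + y) w = a *: f z x w + f z y w &
        f z w (a *: x + y) = a *: f z w x + f z w y].

Definition teq2 (s t : seq (H * H)) : Prop :=
  forall (M : lmodType k) (f : H -> H -> M), bilinear2 f ->
    \sum_(p <- s) f p.1 p.2 = \sum_(p <- t) f p.1 p.2.

Definition teq3 (s t : seq (H * H * H)) : Prop :=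
  forall (M : lmodType k) (f : H -> H -> H -> M), trilinear3 f ->
    \sum_(p <- s) f p.1.1 p.1.2 p.2 = \sum_(p <- t) f p.1.1 p.1.2 p.2.

Definition tscale (a : k) (s : seq (H * H)) := [seq (a *: p.1, p.2) | p <- s].
Definition tmul (s t : seq (H * H)) := [seq (p.1 * q.1, p.2 * q.2) | p <- s, q <- t].
Definition tswap (s : seq (H * H)) := [seq (p.2, p.1) | p <- s].

End Tensors.

(*  pi n : the projection H -> H onto the n-th graded piece H_n              *)
(*         (H = (+)_n H_n, with H_n = image of pi n).                        *)
Section Hopf.
Variables (k : comPzRingType) (H : comAlgType k).
Variables (D : H -> seq (H * H)) (eps : H -> k) (S : H -> H) (pi : nat -> H -> H).

Definition in_deg (n : nat) (x : H) : Prop := pi n x = x.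

Record graded_connected_Hopf : Prop := {
  pi_lin : forall n (a : k) x y, pi n (a *: x + y) = a *: pi n x + pi n y;
  pi_orth : forall n m x, pi n (pi m x) = if n == m then pi m x else 0;
  pi_decomp : forall x, exists N : nat,
      (forall n, (N <= n)%N -> pi n x = 0) /\ x = \sum_(n < N) pi n x;
  mul_graded : forall n m x y, in_deg n x -> in_deg m y -> in_deg (n + m) (x * y);
  one_graded : in_deg 0 1;
  D_lin : forall (a : k) x y, teq2 (D (a *: x + y)) (tscale a (D x) ++ D y);
  D_coassoc : forall x,
      teq3 [seq (q.1, q.2, p.2) | p <- D x, q <- D p.1]
           [seq (p.1, q.1, q.2) | p <- D x, q <- D p.2];
  eps_lin : forall (a : k) x y, eps (a *: x + y) = a * eps x + eps y;
  counit_l : forall x, \sum_(p <- D x) eps p.1 *: p.2 = x;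
  counit_r : forall x, \sum_(p <- D x) eps p.2 *: p.1 = x;
  D_mul : forall x y, teq2 (D (x * y)) (tmul (D x) (D y));
  D_one : teq2 (D 1) [:: (1, 1)];
  eps_mul : forall x y, eps (x * y) = eps x * eps y;
  eps_one : eps 1 = 1;
  D_graded : forall n x, in_deg n x ->
      teq2 (D x) [seq (pi i p.1, pi (n - i) p.2) | i <- iota 0 n.+1, p <- D x];
  eps_graded : forall n x, (0 < n)%N -> in_deg n x -> eps x = 0;
  connected_inj : forall x y, in_deg 0 x -> in_deg 0 y -> eps x = eps y -> x = y;
  connected_surj : forall c : k, exists x, in_deg 0 x /\ eps x = c;
  S_lin : forall (a : k) x y, S (a *: x + y) = a *: S x + S y;
  antipode_l : forall x, \sum_(p <- D x) S p.1 * p.2 = eps x *: 1;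
  antipode_r : forall x, \sum_(p <- D x) p.1 * S p.2 = eps x *: 1
}.

Definition cocommutative : Prop := forall x, teq2 (D x) (tswap (D x)).

(* iterated comultiplication Delta^(n) : H -> H^(x)(n+1), as formal sums of *)
(* lists of length n+1;  Delta^(0) = id, Delta^(n+1) = (id (x) Delta^(n)) o Delta *)
Fixpoint Dit (n : nat) (h : H) : seq (seq H) :=
  if n is n'.+1 then [seq p.1 :: t | p <- D h, t <- Dit n' p.2] else [:: [:: h]].

Definition xi (alpha : seq nat) (h : H) : H :=
  if alpha is _ :: _ then
    \sum_(t <- Dit (size alpha).-1 h) \prod_(i < size alpha) pi (nth 0%N alpha i) (nth 0 t i)
  else eps h *: 1.

End Hopf.

Definition is_comp (a : seq nat) : bool := all (fun x => 0 < x)%N a.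

Definition red (w : seq nat) : seq nat := [seq x <- w | x != 0%N].

Fixpoint boxes (g : seq nat) : seq (seq nat) :=
  if g is x :: g' then [seq y :: t | y <- iota 0 x.+1, t <- boxes g'] else [:: [::]].

Definition subn_seq (g e : seq nat) : seq nat := [seq (p.1 - p.2)%N | p <- zip g e].

(* matrices (as lists of rows) with length g rows, v columns, row i having *)
(* entries <= g_i                                                           *)
Definition mats (g : seq nat) (v : nat) : seq (seq (seq nat)) :=
  foldr (fun x acc => [seq r :: t | r <- boxes (nseq v x), t <- acc]) [:: [::]] g.

Definition rowsums (A : seq (seq nat)) : seq nat := map sumn A.
Definition colsums (A : seq (seq nat)) (v : nat) : seq nat :=
  [seq sumn [seq nth 0%N r j | r <- A] | j <- iota 0 v].
Definition readm (A : seq (seq nat)) : seq nat := flatten A.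
Definition reduced (A : seq (seq nat)) (v : nat) : bool :=
  all (fun x => 0 < x)%N (rowsums A) && all (fun x => 0 < x)%N (colsums A v).

(* H (x) QSym_k.  Since (M_alpha) is a basis of QSym_k, an element of        *)
(* H (x) QSym_k is  sum_alpha f(alpha) (x) M_alpha  with f : Comp -> H of    *)
(* finite support; we represent it by its coefficient function f.           *)
(* Likewise H (x) QSym (x) QSym by coefficient functions of M_a (x) M_b.     *)
Section HQ.
Variables (k : comPzRingType) (H : comAlgType k).

Definition HQ := seq nat -> H.
Definition HQQ := seq nat -> seq nat -> H.

Definition HQ_supp (f : HQ) (s : seq (seq nat)) : Prop :=
  forall alpha, is_comp alpha -> f alpha != 0 -> alpha \in s.

(* product of H (x) QSym: the coefficient of M_gamma in a quasisymmetric   *)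
(* function is the coefficient of x_1^gamma_1 ... x_l^gamma_l, and the      *)
(* coefficient of x^e in M_alpha is 1 if e^red = alpha, 0 otherwise.        *)
Definition HQ_mul (f g : HQ) : HQ :=
  fun gamma => \sum_(e <- boxes gamma) f (red e) * g (red (subn_seq gamma e)).
Definition HQ_one : HQ := fun gamma => if gamma == [::] then 1 else 0.

(* comultiplication id_H (x) Delta : Delta(M_gamma) = sum over splittings  *)
Definition HQ_Delta (f : HQ) : HQQ := fun a b => f (a ++ b).
(* counit id_H (x) eps : eps(M_alpha) = [alpha = empty] *)
Definition HQ_eps (f : HQ) : H := f [::].

(* eps_P(M_alpha) = M_alpha(1,0,0,...) *)
Definition epsP_M (alpha : seq nat) : k := if (size alpha <= 1)%N then 1 else 0.

(* id_H (x) Delta'_P, Delta'_P = tau o Delta_P: coefficient of             *)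
(* M_a (x) M_c  in  sum_delta f(delta) Delta'_P(M_delta) is the sum of     *)
(* f((read A)^red) over reduced A with column A = a and row A = c.          *)
Definition HQ_DeltaP' (f : HQ) : HQQ := fun a c =>
  \sum_(A <- mats c (size a) |
        [&& rowsums A == c, colsums A (size a) == a & reduced A (size a)])
     f (red (readm A)).

(* H (x) Lambda_k inside H (x) QSym_k : elements sum_lambda g(lambda) (x) m_lambda, *)
(* m_lambda = sum_{alpha rearrangement of lambda} M_alpha the monomial symmetric  *)
(* functions (which span Lambda_k).                                           *)
Definition in_HLambda (f : HQ) : Prop :=
  exists g : seq nat -> H, forall alpha, is_comp alpha -> f alpha = g (sort geq alpha).

(* for a map beta : H -> H (x) QSym:  beta^sharp : H (x) H -> H (x) QSym,  *)
(* a (x) h |-> a beta(h)  *)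
Definition fsharp (beta : H -> HQ) (s : seq (H * H)) : HQ :=
  fun a => \sum_(p <- s) p.1 * beta p.2 a.
(* beta^sharp (x)_H beta^sharp :                                           *)
(* (H(x)H)(x)_H(H(x)H) = H(x)H(x)H -> (H(x)Q)(x)_H(H(x)Q) = H(x)Q(x)Q      *)
Definition fsharp2 (beta : H -> HQ) (t : seq (H * H * H)) : HQQ :=
  fun a b => \sum_(r <- t) r.1.1 * beta r.1.2 a * beta r.2 b.

End HQ.

Definition DeltaHH (k : comPzRingType) (H : comAlgType k) (D : H -> seq (H * H))
  (s : seq (H * H)) : seq (H * H * H) :=
  [seq (p.1, q.1, q.2) | p <- s, q <- D p.2].

Definition betaH (k : comPzRingType) (H : comAlgType k) (D : H -> seq (H * H))
  (eps : H -> k) (pi : nat -> H -> H) (h : H) : HQ H :=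
  fun alpha => if is_comp alpha then xi D eps pi alpha h else 0.

(* Main.v *)
Require Import Defs.
From HB Require Import structures.
From mathcomp Require Import all_boot all_order all_algebra.
From Stdlib Require Import FunctionalExtensionality.
Import GRing.Theory.
Set Implicit Arguments.
Unset Strict Implicit.
Lemma map_iota_eq (f : nat -> nat) v (a : seq nat) : size a = v ->
  (map f (iota 0 v) == a) = all (fun j => f j == nth 0 a j) (iota 0 v).
Proof.
move=> ha; apply/eqP/allP => [<- j|h].
  by rewrite mem_iota add0n => /andP[_ hj]; rewrite (nth_map 0) ?size_iota // nth_iota.
apply: (@eq_from_nth _ 0); first by rewrite size_map size_iota.
rewrite size_map size_iota => j hj; rewrite (nth_map 0) ?size_iota // nth_iota //.
by apply/eqP/h; rewrite mem_iota add0n.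
Qed.

Lemma all2_nth (r a : seq nat) v : size r = v -> size a = v ->
  all2 leq r a = all (fun j => nth 0 r j <= nth 0 a j) (iota 0 v).
Proof.
elim: r a v => [|x r IH] [|y a] [|v] //= [hr] [ha].
rewrite (IH a v) // -[1]/(1 + 0) iotaDl all_map; congr (_ && _).
Qed.

Lemma size_subn a r : size r = size a -> size (subn_seq a r) = size a.
Proof. by move=> h; rewrite /subn_seq size_map size_zip h minnn. Qed.

Lemma nth_subn a r j : size r = size a ->
  nth 0 (subn_seq a r) j = nth 0 a j - nth 0 r j.
Proof.
move=> h; case: (ltnP j (size a)) => hj.
  by rewrite /subn_seq (nth_map (0, 0)) ?size_zip ?h ?minnn // nth_zip.
by rewrite !nth_default ?size_subn // h.
Qed.

Lemma nth_le_sumn r j : nth 0 r j <= sumn r.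
Proof.
elim: r j => [|x r IH] [|j] //=; first exact: leq_addr.
by apply: leq_trans (IH j) _; apply: leq_addl.
Qed.

Lemma eqn_addsub x y z : (x + y == z) = (x <= z) && (y == z - x).
Proof.
apply/eqP/andP => [<-|[hxz /eqP ->]]; last by rewrite subnKC.
by rewrite leq_addr addKn.
Qed.

Lemma colsK r t v a : size r = v -> size a = v ->
  (colsums (r :: t) v == a) = all2 leq r a && (colsums t v == subn_seq a r).
Proof.
move=> hr ha; rewrite /colsums /= !map_iota_eq ?size_subn ?hr //.
rewrite (all2_nth hr ha) -all_predI; apply: eq_in_all => j _ /=.
by rewrite eqn_addsub nth_subn ?hr.
Qed.

Lemma mem_boxes g r : (r \in boxes g) = all2 leq r g.
Proof.
elim: g r => [|a g IH] [|x r] //;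
  rewrite -[boxes (a :: g)]/([seq z :: t | z <- iota 0 a.+1, t <- boxes g]).
  by apply/allpairsP => -[[y t] [_ _]].
rewrite [all2 _ _ _]/=.
apply/allpairsP/andP => [[[y t] [hy ht [-> ->]]]|[hx hr]].
  split; last by rewrite -IH.
  by move: hy; rewrite mem_iota add0n ltnS.
by exists (x, r); split; [rewrite mem_iota add0n ltnS | rewrite IH | ].
Qed.

Lemma boxes_uniq g : uniq (boxes g).
Proof.
elim: g => [|a g IH] //.
rewrite -[boxes (a :: g)]/([seq z :: t | z <- iota 0 a.+1, t <- boxes g]).
apply: allpairs_uniq => //; first exact: iota_uniq.
by move=> [x r] [y s] _ _ /= [-> ->].
Qed.

Local Open Scope ring_scope.
Lemma sum_swap (R : nmodType) (T : eqType) (s t : seq T) (F : T -> R) :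
  uniq s -> uniq t -> (forall x, F x != 0%R -> (x \in s) && (x \in t)) ->
  \sum_(x <- s) F x = \sum_(x <- t) F x.
Proof.
move=> us ut hF.
have E : forall u w : seq T, (forall x, F x != 0%R -> x \in w) ->
    \sum_(x <- u) F x = \sum_(x <- [seq x <- u | x \in w]) F x.
  move=> u w hw; rewrite big_filter [RHS]big_mkcond; apply: eq_bigr => x _.
  by case: ifP => // hx; apply/eqP; apply: contraFT hx => /hw.
rewrite (E s t) ?(E t s); last by move=> x /hF /andP[].
  apply: perm_big; apply: uniq_perm; rewrite ?filter_uniq //.
  by move=> x; rewrite !mem_filter andbC.
by move=> x /hF /andP[].
Qed.

Local Open Scope ring_scope.
Set Implicit Arguments.
Unset Strict Implicit.

Section Main.
Variables (k : comPzRingType) (H : comAlgType k).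
Variables (D : H -> seq (H * H)) (eps : H -> k) (S : H -> H) (pi : nat -> H -> H).
Hypothesis hH : graded_connected_Hopf D eps S pi.

Definition lin (f : H -> H) := forall (a : k) x y, f (a *: x + y) = a *: f x + f y.

Lemma lin0 f : lin f -> f 0 = 0.
Proof.
move=> hf; have E := hf 1 0 0; rewrite scale1r addr0 scale1r in E.
by apply: (addrI (f 0)); rewrite addr0 -E.
Qed.

Lemma linD f : lin f -> forall x y, f (x + y) = f x + f y.
Proof. by move=> hf x y; have := hf 1 x y; rewrite !scale1r. Qed.

Lemma linZ f : lin f -> forall a x, f (a *: x) = a *: f x.
Proof. by move=> hf a x; rewrite -[a *: x]addr0 hf lin0 // addr0. Qed.

Lemma lin_sum f I (r : seq I) (P : pred I) (F : I -> H) : lin f ->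
  f (\sum_(i <- r | P i) F i) = \sum_(i <- r | P i) f (F i).
Proof.
move=> hf; elim: r => [|i r IH]; first by rewrite !big_nil lin0.
by rewrite !big_cons; case: (P i) => //; rewrite linD // IH.
Qed.

Definition conv (f g : H -> H) : H -> H := fun h => \sum_(p <- D h) f p.1 * g p.2.
Definition uu : H -> H := fun h => eps h *: 1.

Lemma bil f g : lin f -> lin g -> bilinear2 (fun x y => f x * g y).
Proof.
move=> hf hg a x y z; split.
  by rewrite hf mulrDl scalerAl.
by rewrite hg mulrDr scalerAr.
Qed.

Lemma teqD f g x y : lin f -> lin g -> teq2 x y ->
  \sum_(p <- x) f p.1 * g p.2 = \sum_(p <- y) f p.1 * g p.2.
Proof. by move=> hf hg E; apply: (E H (fun u v => f u * g v)); apply: bil. Qed.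

Lemma conv_lin f g : lin f -> lin g -> lin (conv f g).
Proof.
move=> hf hg a x y; rewrite /conv (teqD hf hg (D_lin hH a x y)).
rewrite big_cat big_map scaler_sumr; congr (_ + _).
by apply: eq_bigr => p _ /=; rewrite linZ // scalerAl.
Qed.

Lemma uu_lin : lin uu.
Proof. by move=> a x y; rewrite /uu (eps_lin hH) scalerDl scalerA. Qed.

Lemma conv_uu_l g : lin g -> conv uu g = g.
Proof.
move=> hg; apply: functional_extensionality => x.
rewrite /conv /uu -{2}(counit_l hH x) lin_sum //.
by apply: eq_bigr => p _; rewrite linZ // -scalerAl mul1r.
Qed.

Lemma conv_uu_r f : lin f -> conv f uu = f.
Proof.
move=> hf; apply: functional_extensionality => x.
rewrite /conv /uu -{2}(counit_r hH x) lin_sum //.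
by apply: eq_bigr => p _; rewrite (linZ hf) -scalerAr mulr1.
Qed.

Lemma conv_assoc f g h : lin f -> lin g -> lin h ->
  conv (conv f g) h = conv f (conv g h).
Proof.
move=> hf hg hh; apply: functional_extensionality => x.
rewrite /conv.
have tri : trilinear3 (fun a b c => f a * g b * h c).
  move=> a y z w v; split.
  - by rewrite hf mulrDl mulrDl -!scalerAl.
  - by rewrite hg mulrDr mulrDl -scalerAr -scalerAl.
  - by rewrite hh mulrDr -scalerAr.
have := D_coassoc hH x tri; rewrite !big_allpairs_dep /= => E.
transitivity (\sum_(p <- D x) \sum_(q <- D p.1) f q.1 * g q.2 * h p.2).
  by apply: eq_bigr => p _; rewrite mulr_suml.
rewrite E; apply: eq_bigr => p _; rewrite mulr_sumr.
by apply: eq_bigr => q _; rewrite mulrA.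
Qed.


Lemma pilin n : lin (pi n).
Proof. exact: pi_lin hH n. Qed.

Lemma in_deg_pi n x : in_deg pi n (pi n x).
Proof. by rewrite /in_deg (pi_orth hH) eqxx. Qed.

Lemma pi_deg n m x : in_deg pi m x -> pi n x = if n == m then x else 0.
Proof. by move=> hx; rewrite -hx (pi_orth hH) hx. Qed.

Lemma decompM x : exists N, forall M, (N <= M)%N ->
  (forall n, (M <= n)%N -> pi n x = 0) /\ x = \sum_(n < M) pi n x.
Proof.
have [N [hv hx]] := pi_decomp hH x; exists N => M hNM; split.
  by move=> n hn; apply: hv; apply: leq_trans hn.
rewrite {1}hx (big_ord_widen M (fun n => pi n x) hNM) big_mkcond /=.
apply: eq_bigr => i _; case: ifP => // /negbT; rewrite -leqNgt => hi.
by rewrite hv.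
Qed.

Lemma eps0 : eps 0 = 0.
Proof.
have E := eps_lin hH 1 0 0; rewrite scale1r addr0 mul1r in E.
by apply: (addrI (eps 0)); rewrite addr0 -E.
Qed.

Lemma epsD x y : eps (x + y) = eps x + eps y.
Proof. by have := eps_lin hH 1 x y; rewrite scale1r mul1r. Qed.

Lemma epsZ a x : eps (a *: x) = a * eps x.
Proof. by have := eps_lin hH a x 0; rewrite addr0 eps0 addr0. Qed.

Lemma eps_sum I (r : seq I) (P : pred I) (F : I -> H) :
  eps (\sum_(i <- r | P i) F i) = \sum_(i <- r | P i) eps (F i).
Proof.
elim: r => [|i r IH]; first by rewrite !big_nil eps0.
by rewrite !big_cons; case: (P i) => //; rewrite epsD IH.
Qed.

Lemma eps_pi0 x : eps (pi 0 x) = eps x.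
Proof.
have [N hN] := decompM x; have [_ hx] := hN N.+1 (leqnSn N).
rewrite {2}hx eps_sum big_ord_recl big1 ?addr0 // => i _.
by apply: (eps_graded hH (n := i.+1)) => //; apply: in_deg_pi.
Qed.

Lemma pi0_uu : pi 0 = uu.
Proof.
apply: functional_extensionality => x; apply: (connected_inj hH).
- exact: in_deg_pi.
- rewrite /in_deg /uu -[eps x *: 1]addr0 pilin lin0 ?addr0; last exact: pilin.
  by have := one_graded hH; rewrite /in_deg => ->.
- by rewrite /uu epsZ (eps_one hH) mulr1 eps_pi0.
Qed.

Fixpoint X (a : seq nat) : H -> H :=
  if a is n :: a' then conv (pi n) (X a') else uu.

Lemma X_lin a : lin (X a).
Proof. elim: a => [|n a IH] /=; [exact: uu_lin | exact: conv_lin (pilin n) IH]. Qed.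

Lemma xi_X a : xi D eps pi a = X a.
Proof.
case: a => [|n a] //; elim: a n => [|m a IH] n.
  apply: functional_extensionality => h.
  rewrite /= conv_uu_r ?big_cons ?big_nil ?big_ord1 ?addr0 //; exact: pilin.
apply: functional_extensionality => h.
rewrite /= -[conv (pi m) (X a)]/(X (m :: a)) -IH /conv big_allpairs_dep; apply: eq_bigr => p _.
rewrite /xi /= mulr_sumr; apply: eq_bigr => t _.
by rewrite big_ord_recl.
Qed.


Lemma X_deg e n h : in_deg pi n h -> sumn e != n -> X e h = 0.
Proof.
elim: e n h => [|a e IH] n h hh hs /=.
  rewrite /uu (eps_graded hH (n := n)) ?scale0r // lt0n eq_sym; exact: hs.
rewrite /conv (teqD (pilin a) (X_lin e) (D_graded hH hh)) big_allpairs_dep.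
apply: big1_seq => i /andP[_]; rewrite mem_iota add0n ltnS => /andP[_ hi].
apply: big1 => p _ /=; rewrite (pi_orth hH); case: eqP => [hai|_]; last by rewrite mul0r.
subst i; rewrite (IH (n - a)%N) ?mulr0 //; first exact: in_deg_pi.
by apply: contra hs => /eqP hs; rewrite /= hs subnKC.
Qed.

Lemma Xpi e n x : X e (pi n x) = if sumn e == n then X e x else 0.
Proof.
case: eqP => [hs|/eqP hs]; last exact: X_deg (in_deg_pi n x) hs.
have [N hN] := decompM x; have [_ hx] := hN (maxn N n.+1) (leq_maxl _ _).
have hn : (n < maxn N n.+1)%N by rewrite leq_max ltnSn orbT.
rewrite {2}hx lin_sum; last exact: X_lin.
rewrite (bigD1 (Ordinal hn)) //= big1 ?addr0 // => i hi.
apply: X_deg; first exact: in_deg_pi.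
by rewrite hs; apply: contra hi => /eqP hi; apply/eqP/val_inj.
Qed.

Lemma X_red a : X (red a) = X a.
Proof.
elim: a => [|n a IH] //; rewrite /red /= in IH *; case: eqP => [->|_] /=.
  by rewrite pi0_uu conv_uu_l ?IH //; exact: X_lin.
by rewrite IH.
Qed.

Lemma X_cat a b : X (a ++ b) = conv (X a) (X b).
Proof.
elim: a => [|n a IH] /=; first by rewrite conv_uu_l //; exact: X_lin.
by rewrite IH conv_assoc //; [exact: pilin | exact: X_lin | exact: X_lin].
Qed.


Lemma sum_iota_ord m (G : nat -> H) :
  \sum_(i <- iota 0 m) G i = \sum_(i < m) G i.
Proof. by rewrite -(big_mkord (fun _ => true)) /index_iota subn0. Qed.

Lemma pi_mul n x y :
  pi n (x * y) = \sum_(i <- iota 0 n.+1) pi i x * pi (n - i) y.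
Proof.
have [Nx hNx] := decompM x; have [Ny hNy] := decompM y.
set M := maxn (maxn Nx Ny) n.+1.
have [_ hx] := hNx M (leq_trans (leq_maxl Nx Ny) (leq_maxl _ _)).
have [_ hy] := hNy M (leq_trans (leq_maxr Nx Ny) (leq_maxl _ _)).
have hnM : (n < M)%N by rewrite leq_max ltnSn orbT.
have -> : x * y = (\sum_(i < M) pi i x) * (\sum_(j < M) pi j y) by rewrite -hx -hy.
rewrite mulr_suml lin_sum; last exact: pilin.
under eq_bigr => i _.
  rewrite mulr_sumr lin_sum; last exact: pilin.
  under eq_bigr => j _ do
    rewrite (pi_deg n (mul_graded hH (in_deg_pi i x) (in_deg_pi j y))).
  over.
transitivity (\sum_(i < M) if (i <= n)%N then pi i x * pi (n - i) y else 0).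
  apply: eq_bigr => i _; case: leqP => hin.
    have hj : (n - i < M)%N by apply: leq_ltn_trans hnM; apply: leq_subr.
    rewrite (bigD1 (Ordinal hj)) //= subnKC // eqxx big1 ?addr0 // => j hj'.
    case: eqP => // hnij; case/eqP: hj'; apply: val_inj => /=.
    by rewrite hnij addKn.
  apply: big1 => j _; case: eqP => // hnij.
  by move: hin; rewrite hnij ltnNge leq_addr.
rewrite sum_iota_ord -big_mkcond /= (big_ord_widen _ (fun i => pi i x * pi (n - i) y) hnM).
by apply: eq_bigl => i; rewrite ltnS.
Qed.


Lemma X_mul g x y :
  X g (x * y) = \sum_(e <- boxes g) X e x * X (subn_seq g e) y.
Proof.
elim: g x y => [|a g IH] x y.
  rewrite /= big_cons big_nil addr0 /uu (eps_mul hH) -scalerAl mul1r scalerA.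
  by rewrite mulrC.
rewrite -[boxes (a :: g)]/([seq z :: t | z <- iota 0 a.+1, t <- boxes g]).
rewrite -[X (a :: g)]/(conv (pi a) (X g)).
rewrite /conv (teqD (pilin a) (X_lin g) (D_mul hH x y)) !big_allpairs_dep.
transitivity (\sum_(p <- D x) \sum_(q <- D y) \sum_(i <- iota 0 a.+1)
   \sum_(t <- boxes g) (pi i p.1 * X t p.2) * (pi (a - i) q.1 * X (subn_seq g t) q.2)).
  apply: eq_bigr => p _; apply: eq_bigr => q _.
  rewrite pi_mul IH mulr_suml; apply: eq_bigr => i _.
  rewrite mulr_sumr; apply: eq_bigr => t _.
  by rewrite mulrACA.
transitivity (\sum_(i <- iota 0 a.+1) \sum_(t <- boxes g) \sum_(p <- D x) \sum_(q <- D y)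
   (pi i p.1 * X t p.2) * (pi (a - i) q.1 * X (subn_seq g t) q.2)).
  transitivity (\sum_(p <- D x) \sum_(i <- iota 0 a.+1) \sum_(t <- boxes g) \sum_(q <- D y)
   (pi i p.1 * X t p.2) * (pi (a - i) q.1 * X (subn_seq g t) q.2)).
    apply: eq_bigr => p _; rewrite exchange_big; apply: eq_bigr => i _.
    exact: exchange_big.
  rewrite exchange_big; apply: eq_bigr => i _; exact: exchange_big.
apply: eq_bigr => i _; apply: eq_bigr => t _.
rewrite /= /conv mulr_suml; apply: eq_bigr => p _.
by rewrite mulr_sumr.
Qed.


Section Cocomm.
Hypothesis hcc : cocommutative D.

Lemma conv_comm f g : lin f -> lin g -> conv f g = conv g f.
Proof.
move=> hf hg; apply: functional_extensionality => x.
rewrite /conv (teqD hf hg (hcc x)) big_map; apply: eq_bigr => p _.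
by rewrite mulrC.
Qed.

Lemma X_rem x t : x \in t -> X t = X (x :: rem x t).
Proof.
elim: t => [|y t IH] //= hx; have [<-|hyx] := eqVneq y x; first by [].
have hxt : x \in t by move: hx; rewrite in_cons eq_sym (negbTE hyx).
rewrite IH //= -conv_assoc; [|exact: pilin|exact: pilin|exact: X_lin].
rewrite [conv (pi y) (pi x)]conv_comm; [|exact: pilin|exact: pilin].
rewrite conv_assoc //; [exact: pilin|exact: pilin|exact: X_lin].
Qed.

Lemma X_perm s t : perm_eq s t -> X s = X t.
Proof.
elim: s t => [|x s IH] t hst.
  by move: hst; rewrite perm_sym => /perm_nilP ->.
have hx : x \in t by rewrite -(perm_mem hst) mem_head.
rewrite (X_rem hx) /= (IH (rem x t)) //.
by rewrite -(perm_cons x) (perm_trans hst) // perm_to_rem.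
Qed.

End Cocomm.


Lemma colsums_nil (a : seq nat) : (colsums [::] (size a) == a) = (sumn a == 0)%N.
Proof.
rewrite /colsums /=.
suff E : forall m, (map (fun _ => 0%N) (iota m (size a)) == a) = (sumn a == 0)%N by apply: E.
elim: a => [|x a IH] //= m.
by rewrite eqseq_cons IH addn_eq0 eq_sym.
Qed.

Lemma X_sumn0 a : sumn a = 0%N -> X a = uu.
Proof.
elim: a => [|x a IH] //= /eqP; rewrite addn_eq0 => /andP[/eqP -> /eqP /IH ->].
by rewrite pi0_uu conv_uu_l //; exact: uu_lin.
Qed.

Lemma X_one a : X a 1 = if sumn a == 0%N then 1 else 0.
Proof.
case: eqP => [/X_sumn0 ->|/eqP hs]; first by rewrite /uu (eps_one hH) scale1r.
exact: X_deg (one_graded hH) hs.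
Qed.

Lemma Gmain c : forall a h, X a (X c h) =
  \sum_(A <- mats c (size a) | (rowsums A == c) && (colsums A (size a) == a))
     X (readm A) h.
Proof.
elim: c => [|c0 c IH] a h.
  rewrite big_cons big_nil /= colsums_nil /uu (linZ (X_lin a)) X_one.
  by case: eqP => _; rewrite ?scaler0 ?addr0.
set v := size a.
rewrite -[X (c0 :: c)]/(conv (pi c0) (X c)) /conv lin_sum; last exact: X_lin.
under eq_bigr => p _ do rewrite X_mul.
rewrite exchange_big.
rewrite -[mats (c0 :: c) _]/([seq r :: t | r <- boxes (nseq v c0), t <- mats c v]).
rewrite [RHS]big_mkcond [RHS]big_allpairs_dep.
pose F r := \sum_(t <- mats c v) if [&& sumn r == c0, rowsums t == c,
   colsums (r :: t) v == a & size r == v] then X (r ++ readm t) h else 0.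
transitivity (\sum_(e <- boxes a) F e).
  apply: eq_big_seq => e; rewrite mem_boxes => he.
  have hse : size e = v by apply/eqP; move: he; rewrite all2E => /andP[].
  rewrite /F; under eq_bigr => p _ do rewrite Xpi.
  case: eqP => hs; last first.
    rewrite big1 => [|p _]; last by rewrite mul0r.
    by rewrite big1.
  under eq_bigr => p _ do rewrite IH big_mkcond mulr_sumr.
  rewrite exchange_big /= size_subn ?hse //.
  apply: eq_bigr => t _; rewrite colsK ?hse // he /= eqxx andbT.
  case: ifP => _; last by rewrite big1 // => p _; rewrite mulr0.
  by rewrite X_cat.
transitivity (\sum_(r <- boxes (nseq v c0)) F r); last first.
  apply: eq_big_seq => r; rewrite mem_boxes => hr.
  have hsr : size r = v by apply/eqP; move: hr; rewrite all2E size_nseq => /andP[].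
  rewrite /F; apply: eq_bigr => t _.
  by rewrite [rowsums _]/= eqseq_cons hsr eqxx andbT andbA.
apply: sum_swap; try exact: boxes_uniq.
move=> r hF; apply/negPn/negP => hn; move/negP: hF; apply.
apply/eqP; apply: big1 => t _; case: ifP => // /and4P[hs hrow hcol hsz].
exfalso; move/negP: hn; apply; move/eqP: hsz => hsz.
rewrite !mem_boxes; move: hcol; rewrite colsK // => /andP[-> _] /=.
rewrite (all2_nth hsz) ?size_nseq //; apply/allP => j; rewrite mem_iota add0n => /andP[_ hj].
by rewrite nth_nseq hj -(eqP hs) nth_le_sumn.
Qed.


Lemma X1 m : X [:: m] = pi m.
Proof. by rewrite /= conv_uu_r //; exact: pilin. Qed.

Lemma X_bound h : exists N, forall a, X a h != 0 -> (sumn a < N)%N.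
Proof.
have [N hN] := decompM h; have [_ hh] := hN N (leqnn N); exists N => a.
apply: contraR; rewrite -leqNgt => ha; apply/eqP.
rewrite hh lin_sum; last exact: X_lin.
apply: big1 => i _; rewrite Xpi; case: eqP => // he.
by move: (ltn_ord i); rewrite -he ltnNge ha.
Qed.

End Main.

Lemma comp_red e : is_comp (red e).
Proof. by rewrite /is_comp /red all_filter; apply/allP => x _ /=; rewrite lt0n implybb. Qed.

Lemma comp_sumn0 a : is_comp a -> (sumn a == 0)%N = (a == [::]).
Proof. by case: a => [|x a] //= /andP[hx _]; rewrite addn_eq0 eqn0Ngt hx. Qed.

Fixpoint lst (m N : nat) : seq (seq nat) :=
  if m is m'.+1 then [::] :: [seq x :: t | x <- iota 0 N, t <- lst m' N] else [:: [::]].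

Lemma mem_lst a m N : (size a <= m)%N -> all (fun x => x < N)%N a -> a \in lst m N.
Proof.
elim: a m => [|x a IH] [|m] //= hs.
move=> /andP[hx ha]; rewrite in_cons /=; apply/allpairsP.
by exists (x, a); split => //; [rewrite mem_iota | apply: IH].
Qed.

Lemma comp_small a N : is_comp a -> (sumn a < N)%N -> a \in lst N N.
Proof.
move=> hc hs; apply: mem_lst.
  apply: leq_trans (ltnW hs); elim: a hc {hs} => [|x a IH] //= /andP[hx ha].
  by rewrite -add1n; exact: leq_add hx (IH ha).
apply/allP => x hx; apply: leq_ltn_trans hs.
have [i hi <-] : exists2 i, (i < size a)%N & nth 0%N a i = x.
  by exists (index x a); [rewrite index_mem | rewrite nth_index].
exact: nth_le_sumn.
Qed.

Unset Implicit Arguments.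
Set Strict Implicit.
Local Open Scope ring_scope.

Theorem theorem5p7 (k : comPzRingType) (H : comAlgType k)
  (D : H -> seq (H * H)) (eps : H -> k) (S : H -> H) (pi : nat -> H -> H) :
  graded_connected_Hopf D eps S pi ->
  let beta := betaH D eps pi in
  [/\ (* beta_H is well defined: the sum is finite *)
      (forall h, exists s, HQ_supp (beta h) s),
      (* (a) k-algebra homomorphism and graded (k,H)-coalgebra homomorphism *)
      [/\ (forall (a : k) x y alpha, beta (a *: x + y) alpha = a *: beta x alpha + beta y alpha),
          (forall x y gamma, is_comp gamma -> beta (x * y) gamma = HQ_mul (beta x) (beta y) gamma),
          (forall gamma, is_comp gamma -> beta 1 gamma = HQ_one H gamma),
          (forall s a b, is_comp a -> is_comp b ->
              HQ_Delta (fsharp beta s) a b = fsharp2 beta (DeltaHH D s) a b) &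
          (forall s, HQ_eps (fsharp beta s) = \sum_(p <- s) eps p.2 *: p.1) /\
          (forall n h alpha, in_deg pi n h -> is_comp alpha -> sumn alpha <> n ->
              beta h alpha = 0)],
      (* (b) (id (x) eps_P) o beta_H = id_H *)
      (forall h s, uniq s -> HQ_supp (beta h) s ->
          \sum_(alpha <- s) epsP_M k alpha *: beta h alpha = h),
      (* (c) (beta_H (x) id) o beta_H = (id (x) Delta'_P) o beta_H *)
      (forall h a c, is_comp a -> is_comp c ->
          beta (beta h c) a = HQ_DeltaP' (beta h) a c) &
      (* (d) cocommutative => beta_H(H) in H (x) Lambda *)
      (cocommutative D -> forall h, in_HLambda (beta h))].
Proof.
move=> hH beta.
have bE : forall h a, is_comp a -> beta h a = X D eps pi a h.
  by move=> h a ha; rewrite /beta /betaH ha (xi_X hH).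
have bN : forall h a, ~~ is_comp a -> beta h a = 0.
  by move=> h a ha; rewrite /beta /betaH (negbTE ha).
have bR : forall h e, beta h (red e) = X D eps pi e h.
  by move=> h e; rewrite bE ?comp_red // (X_red hH).
split.
- move=> h; have [N hN] := X_bound hH h; exists (lst N N) => a ha hb.
  by apply: comp_small => //; apply: hN; rewrite -bE.
- split.
  + move=> a x y al; case: (boolP (is_comp al)) => hal.
      by rewrite !bE // (X_lin hH).
    by rewrite !bN // scaler0 addr0.
  + move=> x y g hg; rewrite bE // (X_mul hH) /HQ_mul.
    by apply: eq_bigr => e _; rewrite !bR.
  + move=> g hg; rewrite bE // (X_one hH) /HQ_one comp_sumn0 //.
  + move=> s a b ha hb; rewrite /HQ_Delta /fsharp /fsharp2 /DeltaHH big_allpairs_dep.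
    apply: eq_bigr => p _; rewrite bE; last by rewrite /is_comp all_cat; apply/andP.
    rewrite (X_cat hH) /conv mulr_sumr.
    by apply: eq_bigr => q _; rewrite !bE // mulrA.
  + split.
      move=> s; rewrite /HQ_eps /fsharp; apply: eq_bigr => p _.
      by rewrite /beta /betaH /= -scalerAr mulr1.
    move=> n h al hh hal hs; rewrite bE //; apply: (X_deg hH hh); exact/eqP.
- move=> h s us hs.
  have [N hN] := decompM hH h; have [hv hh] := hN N.+1 (leqnSn N).
  pose F al := epsP_M k al *: beta h al.
  rewrite (@sum_swap _ _ s ([::] :: [seq [:: n.+1] | n <- iota 0 N]) F) //.
  + rewrite big_cons big_map [RHS]hh big_ord_recl /F /epsP_M /=.
    rewrite !scale1r bE // /= (pi0_uu hH); congr (_ + _).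
    rewrite -(sum_iota_ord N (fun i => pi (bump 0 i) h)); apply: eq_bigr => n _.
    by rewrite scale1r bE // (X1 hH) /bump leq0n add1n.
  + rewrite /= map_inj_uniq ?iota_uniq ?andbT; last by move=> x y [].
    by apply/mapP => -[].
  + move=> al; rewrite /F; case: (boolP (is_comp al)) => hal; last by rewrite bN ?scaler0 ?eqxx.
    have hsa := hs al hal; rewrite /epsP_M.
    case: ifP => hsz; last by rewrite scale0r eqxx.
    rewrite scale1r => hb; rewrite hsa // in_cons.
    case: al hal hsz hb {hsa} => [|m [|//]] //= /andP[hm _] _; rewrite bE /is_comp /= ?hm //.
    rewrite (conv_uu_r hH (pilin hH m)) => hpm; apply/mapP; exists m.-1; last by rewrite prednK.
    rewrite mem_iota add0n; case: m hm hpm => //= m _ hpm.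
    by rewrite ltnNge; apply: contra hpm => hNm; rewrite hv.
- move=> h a c ha hc; rewrite !bE // (Gmain hH) /HQ_DeltaP'.
  apply: eq_big => [A|A _]; last by rewrite bR.
  rewrite /reduced; case: eqP => [->|] //=; case: eqP => [->|] //=.
  by move: ha hc; rewrite /is_comp => -> ->.
- move=> hcc h; exists (fun l => X D eps pi l h) => al hal.
  rewrite bE //= (X_perm hH hcc (s := al) (t := sort geq al)) //.
  by rewrite perm_sym; apply: permEl; apply: perm_sort.
Qed.
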